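(* Let $G=(V_1\cup V_2,E)$ be a bipartite graph with $V_1=\{1,\dots,n\}$, $V_2=\{1,\dots,m\}$ and arcs from $V_1$ to $V_2$. For each arc between $j\in V_1$ and $i\in V_2$ let $t_{ij}\in\{0,1\}$ be a random variable with $\mathbb P(t_{ij}=1)=a_{ij}\in[0,1]$ (and $t_{ij}=0$ if there is no arc), all $t_{ij}$ mutually independent (independent probability coverage model). For $x\in\{0,1\}^n$ let $\sigma(x)=|\{i\in V_2:\exists j\in V_1\text{ with }x_j=1\text{ and }t_{ij}=1\}|$ be the random number of covered items, let $k$ be a positive integer and $\mathcal X=\{x\in\{0,1\}^n:\sum_{j\in V_1}x_j\le k\}$, and let $\alpha\in(0,1]$. Then there is an algorithm that, given $x\in\mathcal X$ (and the probabilities $a_{ij}$), computes $\mathrm{CVaR}_\alpha(\sigma(x))$ exactly in time polynomial in $n$ and $m$.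
   Context: For an integrable random variable $Y$ and $\alpha\in(0,1]$, $\mathrm{CVaR}_\alpha(Y)=\max_{\eta\in\mathbb R}\{\eta-\frac1\alpha\mathbb E([\eta-Y]_+)\}$, where $[z]_+=\max(z,0)$. *)

(* Defs.v *)
From HB Require Import structures.
From mathcomp Require Import all_boot all_order all_algebra.
From mathcomp Require Import all_classical all_reals all_analysis.
Set Implicit Arguments. Unset Strict Implicit. Unset Printing Implicit Defensive.
Import Order.TTheory GRing.Theory Num.Theory.
Local Open Scope ring_scope.
Local Open Scope classical_set_scope.

(* CVaR_alpha(Y) = sup_eta { eta - (1/alpha) E[ [eta - Y]_+ ] }  (the paper's
   max, written as a supremum in the extended reals).                 *)
Definition CVaR (R : realType) (d : measure_display) (T : measurableType d)
  (P : probability T R) (alpha : R) (Y : T -> R) : \bar R :=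
  ereal_sup [set (eta%:E - (alpha^-1)%:E *
                   \int[P]_w (Num.max (eta - Y w) 0)%:E)%E | eta in [set: R]].

Definition covered (T : Type) (n m : nat) (t : 'I_m -> 'I_n -> T -> bool)
  (x : 'I_n -> bool) (w : T) : nat :=
  #|[pred i : 'I_m | [exists j : 'I_n, x j && t i j w]]|.

Definition sigma (R : realType) (T : Type) (n m : nat)
  (t : 'I_m -> 'I_n -> T -> bool) (x : 'I_n -> bool) : T -> R :=
  fun w => (covered t x w)%:R.

(* mutual independence of the events {t_ij = 1} (equivalently, of the
   Bernoulli random variables t_ij): product rule over every subfamily *)
Definition mutually_independent (R : realType) (d : measure_display)
  (T : measurableType d) (P : probability T R) (I : finType)
  (A : I -> set T) : Prop :=
  forall S : {set I},
    P [set w : T | forall p, p \in S -> A p w] = (\prod_(p in S) P (A p))%E.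

(* Computational model: a real-RAM (exact arithmetic) while-language   *)
(* run is the number of executed statements / loop tests.            *)

Inductive nexp :=
| NConst of nat | NVar of nat
| NAdd of nexp & nexp | NSub of nexp & nexp | NMul of nexp & nexp.

Inductive rexp :=
| RNat of nexp | RVar of nat | RArr of nat & nexp
| RAdd of rexp & rexp | RSub of rexp & rexp | RMul of rexp & rexp
| RDiv of rexp & rexp.

Inductive bexp :=
| BLeN of nexp & nexp | BLeR of rexp & rexp
| BNot of bexp | BAnd of bexp & bexp.

Inductive cmd :=
| Skip
| NAssign of nat & nexp
| RAssign of nat & rexp
| AAssign of nat & nexp & rexp
| Seq of cmd & cmd
| If of bexp & cmd & cmd
| While of bexp & cmd.

Record state (R : Type) := State {
  nv : nat -> nat;
  rv : nat -> R;
  ar : nat -> nat -> R }.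

Section Sem.
Variable R : realFieldType.

Fixpoint neval (s : state R) (e : nexp) : nat :=
  match e with
  | NConst c => c
  | NVar v => nv s v
  | NAdd e1 e2 => (neval s e1 + neval s e2)%N
  | NSub e1 e2 => (neval s e1 - neval s e2)%N
  | NMul e1 e2 => (neval s e1 * neval s e2)%N
  end.

Fixpoint reval (s : state R) (e : rexp) : R :=
  match e with
  | RNat e => (neval s e)%:R
  | RVar v => rv s v
  | RArr a e => ar s a (neval s e)
  | RAdd e1 e2 => reval s e1 + reval s e2
  | RSub e1 e2 => reval s e1 - reval s e2
  | RMul e1 e2 => reval s e1 * reval s e2
  | RDiv e1 e2 => reval s e1 / reval s e2
  end.

Fixpoint beval (s : state R) (b : bexp) : bool :=
  match b with
  | BLeN e1 e2 => (neval s e1 <= neval s e2)%N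
  | BLeR e1 e2 => reval s e1 <= reval s e2
  | BNot b => ~~ beval s b
  | BAnd b1 b2 => beval s b1 && beval s b2
  end.

Definition upd {A : Type} (f : nat -> A) (i : nat) (v : A) : nat -> A :=
  fun j => if j == i then v else f j.

Inductive exec : cmd -> state R -> nat -> state R -> Prop :=
| ESkip s : exec Skip s 1 s
| ENAssign s v e :
    exec (NAssign v e) s 1 (State (upd (nv s) v (neval s e)) (rv s) (ar s))
| ERAssign s v e :
    exec (RAssign v e) s 1 (State (nv s) (upd (rv s) v (reval s e)) (ar s))
| EAAssign s a i e :
    exec (AAssign a i e) s 1
      (State (nv s) (rv s) (upd (ar s) a (upd (ar s a) (neval s i) (reval s e))))
| ESeq c1 c2 s s1 s2 k1 k2 :
    exec c1 s k1 s1 -> exec c2 s1 k2 s2 -> exec (Seq c1 c2) s (k1 + k2) s2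
| EIfT b c1 c2 s s' k :
    beval s b = true -> exec c1 s k s' -> exec (If b c1 c2) s k.+1 s'
| EIfF b c1 c2 s s' k :
    beval s b = false -> exec c2 s k s' -> exec (If b c1 c2) s k.+1 s'
| EWhileF b c s : beval s b = false -> exec (While b c) s 1 s
| EWhileT b c s s1 s2 k1 k2 :
    beval s b = true -> exec c s k1 s1 -> exec (While b c) s1 k2 s2 ->
    exec (While b c) s (k1 + k2).+1 s2.

End Sem.

(* Input encoding: nat registers 0,1,2 hold n, m, k; real register 0
   holds alpha; array 0 holds x (x_j at index j, as 0/1); array 1 holds
   the matrix a (a_ij at index i*n + j).  Everything else is 0.  The
   output is read from real register 0 at termination. *)
Definition init_state (R : realFieldType) (n m k : nat) (alpha : R)
  (x : 'I_n -> bool) (a : 'I_m -> 'I_n -> R) : state R :=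
  State
    (fun v => match v with 0 => n | 1 => m | 2 => k | _ => 0 end)%N
    (fun v => if v == 0%N then alpha else 0)
    (fun id idx =>
       if id == 0%N then
         match insub idx : option 'I_n with
         | Some j => if x j then 1 else 0 | None => 0 end
       else if id == 1%N then
         match insub (idx %/ n)%N : option 'I_m, insub (idx %% n)%N : option 'I_n with
         | Some i, Some j => a i j | _, _ => 0 end
       else 0).

(* Main.v *)
Require Import Defs.
From HB Require Import structures.
From mathcomp Require Import all_boot all_order all_algebra.
From mathcomp Require Import all_classical all_reals all_analysis.
From mathcomp Require Import zify ring lra.
From Stdlib Require Import Lia.
Import Order.TTheory GRing.Theory Num.Theory.
Local Open Scope ring_scope.
Local Open Scope classical_set_scope.
Set Implicit Arguments. Unset Strict Implicit.

Section Logic.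
Variable R : realFieldType.

Definition triple (c : cmd) (Pre Post : state R -> Prop) (K : nat) :=
  forall s, Pre s -> exists s' k, exec c s k s' /\ (k <= K)%N /\ Post s'.

Lemma t_seq c1 c2 P Q S K1 K2 :
  triple c1 P Q K1 -> triple c2 Q S K2 -> triple (Seq c1 c2) P S (K1 + K2).
Proof.
move=> h1 h2 s Ps; have [s1 [k1 [e1 [k1K Qs1]]]] := h1 s Ps.
have [s2 [k2 [e2 [k2K Ss2]]]] := h2 s1 Qs1.
exists s2, (k1 + k2)%N; split; first exact: ESeq e1 e2.
by split=> //; apply: leq_add.
Qed.

Lemma t_conseq c P P' Q Q' K K' :
  triple c P Q K -> (forall s, P' s -> P s) -> (forall s, Q s -> Q' s) ->
  (K <= K')%N -> triple c P' Q' K'.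
Proof.
move=> h hP hQ hK s /hP /h [s' [k [e [kK Qs]]]]; exists s', k; split => //.
by split; [exact: leq_trans kK hK| exact: hQ].
Qed.

Lemma t_nassign v e P Q :
  (forall s, P s -> Q (State (upd (nv s) v (neval s e)) (rv s) (ar s))) ->
  triple (NAssign v e) P Q 1.
Proof. by move=> h s Ps; eexists _, _; split; [exact: ENAssign|split=>//; exact: h]. Qed.

Lemma t_rassign v e P Q :
  (forall s, P s -> Q (State (nv s) (upd (rv s) v (reval s e)) (ar s))) ->
  triple (RAssign v e) P Q 1.
Proof. by move=> h s Ps; eexists _, _; split; [exact: ERAssign|split=>//; exact: h]. Qed.

Lemma t_aassign a i e P Q :
  (forall s, P s -> Q (State (nv s) (rv s) (upd (ar s) a (upd (ar s a) (neval s i) (reval s e))))) ->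
  triple (AAssign a i e) P Q 1.
Proof. by move=> h s Ps; eexists _, _; split; [exact: EAAssign|split=>//; exact: h]. Qed.

Lemma t_skip P Q : (forall s, P s -> Q s) -> triple Skip P Q 1.
Proof. by move=> h s Ps; exists s, 1%N; split; [exact: ESkip|split=>//; exact: h]. Qed.

Lemma t_if b c1 c2 P Q K :
  triple c1 (fun s => P s /\ beval s b = true) Q K ->
  triple c2 (fun s => P s /\ beval s b = false) Q K ->
  triple (If b c1 c2) P Q K.+1.
Proof.
move=> h1 h2 s Ps; case E: (beval s b).
  have [s' [k [e [kK Qs]]]] := h1 s (conj Ps E).
  by exists s', k.+1; split; [exact: EIfT|].
have [s' [k [e [kK Qs]]]] := h2 s (conj Ps E).
by exists s', k.+1; split; [exact: EIfF|].
Qed.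

Lemma t_while b c (I : nat -> state R -> Prop) (N K : nat) :
  (forall i s, I i s -> beval s b = (i < N)%N) ->
  (forall i, (i < N)%N -> triple c (I i) (I i.+1) K) ->
  forall i, (i <= N)%N ->
  triple (While b c) (I i) (I N) ((N - i) * K.+1 + 1).
Proof.
move=> hb hc i iN.
have [d Hd] : exists d, (N - i = d)%N by eexists.
elim: d i iN Hd => [|d IH] i iN Hd s Is.
  have eiN : i = N by apply/eqP; rewrite eqn_leq iN /= -subn_eq0 Hd.
  subst i; exists s, 1%N; split; first by apply: EWhileF; rewrite (hb _ _ Is) ltnn.
  by rewrite Hd.
have iN' : (i < N)%N by rewrite -subn_gt0 Hd.
have [s1 [k1 [e1 [k1K Is1]]]] := hc i iN' s Is.
have Hd' : (N - i.+1 = d)%N by rewrite subnS Hd.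
have [s2 [k2 [e2 [k2K Is2]]]] := IH i.+1 iN' Hd' s1 Is1.
exists s2, (k1 + k2).+1; split; first by apply: EWhileT e1 e2; rewrite (hb _ _ Is).
split=> //; rewrite Hd.
move: k2K; rewrite Hd' => k2K.
rewrite mulSn; lia.
Qed.

End Logic.
Arguments triple {R}.

Definition one := RNat (NConst 1).
Definition incr v := NAssign v (NAdd (NVar v) (NConst 1)).
Definition jloop := While (BLeN (NAdd (NVar 4) (NConst 1)) (NVar 0))
   (Seq (RAssign 1 (RMul (RVar 1) (RSub one (RMul (RArr 0 (NVar 4))
            (RArr 1 (NAdd (NMul (NVar 3) (NVar 0)) (NVar 4)))))))
        (incr 4)).
Definition uloop := While (BLeN (NVar 5) (NVar 1))
   (Seq (AAssign 2 (NSub (NAdd (NVar 1) (NConst 1)) (NVar 5))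
           (RAdd (RMul (RArr 2 (NSub (NAdd (NVar 1) (NConst 1)) (NVar 5))) (RVar 1))
                 (RMul (RArr 2 (NSub (NVar 1) (NVar 5))) (RSub one (RVar 1)))))
        (incr 5)).
Definition ibody := Seq (RAssign 1 one) (Seq (NAssign 4 (NConst 0))
  (Seq jloop (Seq (NAssign 5 (NConst 0)) (Seq uloop (incr 3))))).
Definition iloop := While (BLeN (NAdd (NVar 3) (NConst 1)) (NVar 1)) ibody.
Definition kbody := Seq (RAssign 6 (RSub (RNat (NVar 6)) (RDiv (RVar 4) (RVar 0))))
  (Seq (If (BLeR (RVar 2) (RVar 6)) (RAssign 2 (RVar 6)) Skip)
  (Seq (RAssign 3 (RAdd (RVar 3) (RArr 2 (NAdd (NVar 6) (NConst 1)))))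
  (Seq (RAssign 4 (RAdd (RVar 4) (RVar 3))) (incr 6)))).
Definition kloop := While (BLeN (NVar 6) (NVar 1)) kbody.
Definition prog := Seq (AAssign 2 (NConst 1) one) (Seq (NAssign 3 (NConst 0)) (Seq iloop
   (Seq (RAssign 2 (RNat (NConst 0))) (Seq (RAssign 3 (RNat (NConst 0)))
   (Seq (RAssign 4 (RNat (NConst 0))) (Seq (NAssign 6 (NConst 0))
   (Seq kloop (RAssign 0 (RVar 2))))))))).

Section ProgSpec.
Variable R : realFieldType.
Variables (n m : nat) (alpha : R) (A0 A1 : nat -> R).

Definition rn (i : nat) : R := \prod_(0 <= j < n) (1 - A0 j * A1 (i * n + j)%N).
Definition lin (r : R) : {poly R} := r%:P + (1 - r) *: 'X.
Definition Qn (i : nat) : {poly R} := \prod_(0 <= l < i) lin (rn l).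
Definition qc v := (Qn m)`_v.
Definition Cn k := \sum_(0 <= v < k) qc v.
Definition Fn k := \sum_(0 <= v < k) qc v * (k - v)%:R.
Definition Gn k := k%:R - Fn k / alpha.
Fixpoint bestf k := match k with 0%N => 0 | k'.+1 =>
  if bestf k' <= Gn k' then Gn k' else bestf k' end.

Lemma coef_lin (Q : {poly R}) r k :
  (Q * lin r)`_k = Q`_k * r + (if k is k'.+1 then Q`_k' else 0) * (1 - r).
Proof.
rewrite /lin mulrDr coefD coefMC -scalerAr coefZ coefMX.
case: k => [|k] /=; first by rewrite mulr0 mul0r.
by rewrite [_ * Q`_k]mulrC.
Qed.

Lemma Fn_rec k : Fn k.+1 = Fn k + Cn k.+1.
Proof.
rewrite /Fn /Cn.
rewrite (eq_big_nat _ _ (F2 := fun v => qc v * (k - v)%:R + qc v)); last first.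
  by move=> v /andP[_ hv]; rewrite subSn // mulrS mulrDr mulr1 addrC.
by rewrite big_split /= big_nat_recr //= subnn mulr0 addr0.
Qed.


Definition Common (s : state R) := nv s 0 = n /\ nv s 1 = m /\ rv s 0 = alpha /\
  ar s 0 = A0 /\ ar s 1 = A1.
Definition Arr (s : state R) (f : nat -> R) :=
  ar s 2 0 = 0 /\ forall idx, (0 < idx <= m.+1)%N -> ar s 2 idx = f idx.-1.
Definition Iinv i s := Common s /\ nv s 3 = i /\ Arr s (fun v => (Qn i)`_v).
Definition Jinv i j s := Iinv i s /\ nv s 4 = j /\
  rv s 1 = \prod_(0 <= l < j) (1 - A0 l * A1 (i * n + l)%N).
Definition Uinv i u s := Common s /\ nv s 3 = i /\ nv s 5 = u /\ rv s 1 = rn i /\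
  Arr s (fun v => if (m.+1 - u < v.+1)%N then (Qn i.+1)`_v else (Qn i)`_v).


Lemma jbody_ok i j : triple
  (Seq (RAssign 1 (RMul (RVar 1) (RSub one (RMul (RArr 0 (NVar 4))
            (RArr 1 (NAdd (NMul (NVar 3) (NVar 0)) (NVar 4)))))))
        (incr 4)) (Jinv i j) (Jinv i j.+1) 2.
Proof.
apply: (t_seq (K1 := 1) (K2 := 1) (Q := fun s => Iinv i s /\ nv s 4 = j /\
  rv s 1 = \prod_(0 <= l < j.+1) (1 - A0 l * A1 (i * n + l)%N))).
  apply: t_rassign => s [[[h0 [h1 [h2 [h3 h4]]]] [h5 h6]] [h7 h8]].
  rewrite /Iinv /Common /upd /=; do !split => //.
  by rewrite h8 h7 h3 h4 h5 h0 big_nat_recr.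
apply: t_nassign => s [[[h0 [h1 [h2 [h3 h4]]]] [h5 h6]] [h7 h8]].
by rewrite /Jinv /Iinv /Common /upd /= h7 addn1.
Qed.


Lemma Qn_rec i : Qn i.+1 = Qn i * lin (rn i).
Proof. by rewrite /Qn big_nat_recr. Qed.

Lemma ubody_ok i u : (u < m.+1)%N -> triple
   (Seq (AAssign 2 (NSub (NAdd (NVar 1) (NConst 1)) (NVar 5))
           (RAdd (RMul (RArr 2 (NSub (NAdd (NVar 1) (NConst 1)) (NVar 5))) (RVar 1))
                 (RMul (RArr 2 (NSub (NVar 1) (NVar 5))) (RSub one (RVar 1)))))
        (incr 5)) (Uinv i u) (Uinv i u.+1) 2.
Proof.
move=> um.
apply: (t_seq (K1:=1) (K2:=1) (Q := fun s => Common s /\ nv s 3 = i /\ nv s 5 = u /\ rv s 1 = rn i /\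
  Arr s (fun v => if (m.+1 - u.+1 < v.+1)%N then (Qn i.+1)`_v else (Qn i)`_v))).
  apply: t_aassign => s [[h0 [h1 [h2 [h3 h4]]]] [h5 [h6 [h7 [h8 h9]]]]].
  rewrite /Common /Arr /upd /=; do !split => //.
    rewrite h1 h6; case: ifP => // /eqP; lia.
  move=> idx hidx; rewrite h1 h6 h7.
  case: (eqVneq idx (m + 1 - u)%N) => [->|ne].
    have e1 : ((m + 1 - u).-1 = m - u)%N by lia.
    have c1 : (m.+1 - u.+1 < (m + 1 - u).-1.+1)%N by lia.
    rewrite c1 e1 h9; last by lia.
    have c2 : (m.+1 - u < (m + 1 - u).-1.+1)%N = false by lia.
    rewrite c2 e1 Qn_rec coef_lin.
    case E: (m - u)%N => [|k].
      by rewrite h8 mul0r.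
    rewrite h9; last by lia.
    rewrite /=; have -> : (m.+1 - u < k.+1)%N = false by lia.
    by [].
  rewrite h9 //.
  have -> : (m.+1 - u.+1 < idx.-1.+1)%N = (m.+1 - u < idx.-1.+1)%N.
    apply/idP/idP; move: ne => /eqP ne; lia.
  by [].
apply: t_nassign => s [[h0 [h1 [h2 [h3 h4]]]] [h5 [h6 [h7 h9]]]].
by rewrite /Uinv /Common /upd /= h6 addn1.
Qed.


Lemma jloop_ok i : triple jloop (Jinv i 0) (Jinv i n) ((n - 0) * 3 + 1).
Proof.
apply: t_while => //.
  by move=> j s [[[h0 _] _] [h4 _]]; rewrite /= h0 h4 addn1.
by move=> j _; apply: jbody_ok.
Qed.

Lemma uloop_ok i : triple uloop (Uinv i 0) (Uinv i m.+1) ((m.+1 - 0) * 3 + 1).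
Proof.
apply: t_while => //.
  by move=> u s [[h0 [h1 _]] [_ [h5 _]]]; rewrite /= h1 h5 ltnS.
by move=> u hu; apply: ubody_ok.
Qed.

Lemma ibody_ok i : (i < m)%N -> triple ibody (Iinv i) (Iinv i.+1) (3 * n + 3 * m + 12)%N.
Proof.
move=> im.
apply: (t_conseq (P := Iinv i) (Q := Iinv i.+1) (K := (1 + (1 + (((n-0)*3+1) + (1 + (((m.+1 - 0)*3+1) + 1)))))%N)); last 3 first.
- by [].
- by [].
- lia.
apply: (t_seq (Q := fun s => Iinv i s /\ rv s 1 = 1)).
  apply: t_rassign => s [[h0 [h1 [h2 [h3 h4]]]] [h5 [h6 h7]]].
  by rewrite /Iinv /Common /Arr /upd /=.
apply: (t_seq (Q := Jinv i 0)).
  apply: t_nassign => s [[[h0 [h1 [h2 [h3 h4]]]] [h5 [h6 h7]]] h8].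
  by rewrite /Jinv /Iinv /Common /Arr /upd /= big_geq.
apply: t_seq; first exact: jloop_ok.
apply: (t_seq (Q := Uinv i 0)).
  apply: t_nassign => s [[[h0 [h1 [h2 [h3 h4]]]] [h5 [h6 h7]]] [h8 h9]].
  rewrite /Uinv /Common /Arr /upd /=; do !split => //.
  move=> idx hidx; rewrite h7 //.
  by have -> : (m.+1 - 0 < idx.-1.+1)%N = false by lia.
apply: t_seq; first exact: uloop_ok.
apply: t_nassign => s [h0 [h1 [h2 [h3 [h4 h5]]]]].
rewrite /Iinv /Common /Arr /upd /= h1 addn1; do !split => //.
move=> idx hidx; rewrite h5 //.
by have -> : (m.+1 - m.+1 < idx.-1.+1)%N = true by lia.
Qed.


Lemma iloop_ok : triple iloop (Iinv 0) (Iinv m) ((m - 0) * (3 * n + 3 * m + 12).+1 + 1)%N.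
Proof.
apply: t_while => //.
  by move=> i s [[h0 [h1 _]] [h3 _]]; rewrite /= h1 h3 addn1.
by move=> i hi; apply: ibody_ok.
Qed.

Definition Kinv k (s : state R) := nv s 1 = m /\ rv s 0 = alpha /\ Arr s qc /\ nv s 6 = k /\
  rv s 2 = bestf k /\ rv s 3 = Cn k /\ rv s 4 = Fn k.

Lemma kbody_ok k : (k < m.+1)%N -> triple kbody (Kinv k) (Kinv k.+1) 6.
Proof.
move=> km.
apply: (t_seq (K1 := 1) (K2 := 5) (Q := fun s => Kinv k s /\ rv s 6 = Gn k)).
  apply: t_rassign => s [h1 [h2 [h3 [h4 [h5 [h6 h7]]]]]].
  by rewrite /Kinv /Arr /upd /= h4 h2 h7 /Gn.
pose K2 s := nv s 1 = m /\ rv s 0 = alpha /\ Arr s qc /\ nv s 6 = k /\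
  rv s 2 = bestf k.+1 /\ rv s 3 = Cn k /\ rv s 4 = Fn k.
apply: (t_seq (K1 := 2) (K2 := 3) (Q := K2)).
  apply: t_if.
    apply: t_rassign => s [[[h1 [h2 [h3 [h4 [h5 [h6 h7]]]]]] h8] hb].
    move: hb; rewrite /= h5 h8 => hb.
    by rewrite /K2 /Arr /upd /= hb.
  apply: t_skip => s [[[h1 [h2 [h3 [h4 [h5 [h6 h7]]]]]] h8] hb].
  move: hb; rewrite /= ?h5 ?h8 => hb.
  by rewrite /K2 /= hb.
pose K3 s := nv s 1 = m /\ rv s 0 = alpha /\ Arr s qc /\ nv s 6 = k /\
  rv s 2 = bestf k.+1 /\ rv s 3 = Cn k.+1 /\ rv s 4 = Fn k.
apply: (t_seq (K1 := 1) (K2 := 2) (Q := K3)).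
  apply: t_rassign => s [h1 [h2 [[h3 h3'] [h4 [h5 [h6 h7]]]]]].
  rewrite /K3 /Arr /upd /= h4 h6 h1 h2 h5 h7; do !split => //.
  by rewrite addn1 h3' // /Cn big_nat_recr.
pose K4 s := nv s 1 = m /\ rv s 0 = alpha /\ Arr s qc /\ nv s 6 = k /\
  rv s 2 = bestf k.+1 /\ rv s 3 = Cn k.+1 /\ rv s 4 = Fn k.+1.
apply: (t_seq (K1 := 1) (K2 := 1) (Q := K4)).
  apply: t_rassign => s [h1 [h2 [h3 [h4 [h5 [h6 h7]]]]]].
  by rewrite /K4 /Arr /upd /= h6 h7 Fn_rec.
apply: t_nassign => s [h1 [h2 [h3 [h4 [h5 [h6 h7]]]]]].
by rewrite /Kinv /Arr /upd /= h4 addn1.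
Qed.

Lemma kloop_ok : triple kloop (Kinv 0) (Kinv m.+1) ((m.+1 - 0) * 7 + 1)%N.
Proof.
apply: t_while => //.
  by move=> k s [h1 [_ [_ [h6 _]]]]; rewrite /= h1 h6 ltnS.
by move=> k hk; apply: kbody_ok.
Qed.

Lemma prog_ok : triple prog
  (fun s => Common s /\ forall idx, ar s 2 idx = 0)
  (fun s => rv s 0 = bestf m.+1) (40 * ((n + m + 1) * (n + m + 1)))%N.
Proof.
apply: (t_conseq (P := fun s => Common s /\ forall idx, ar s 2 idx = 0)
  (Q := fun s => rv s 0 = bestf m.+1)
  (K := (1 + (1 + (((m - 0) * (3 * n + 3 * m + 12).+1 + 1) + (1 + (1 + (1 + (1 +
     (((m.+1 - 0) * 7 + 1) + 1))))))))%N)); last 3 first.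
- by [].
- by [].
- nia.
apply: (t_seq (Q := fun s => Common s /\ Arr s (fun v => (Qn 0)`_v))).
  apply: t_aassign => s [[h0 [h1 [h2 [h3 h4]]]] h5].
  rewrite /Common /Arr /upd /= h5; do !split => //.
  move=> idx hidx; rewrite /Qn big_geq // coef1.
  by case: idx hidx => [|[|idx]] //= _; rewrite h5.
apply: (t_seq (Q := Iinv 0)).
  apply: t_nassign => s [[h0 [h1 [h2 [h3 h4]]]] h5].
  by rewrite /Iinv /Common /upd /=.
apply: t_seq; first exact: iloop_ok.
apply: (t_seq (Q := fun s => Iinv m s /\ rv s 2 = 0)).
  apply: t_rassign => s [[h0 [h1 [h2 [h3 h4]]]] [h5 h6]].
  by rewrite /Iinv /Common /upd /=.
apply: (t_seq (Q := fun s => Iinv m s /\ rv s 2 = 0 /\ rv s 3 = 0)).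
  apply: t_rassign => s [[[h0 [h1 [h2 [h3 h4]]]] [h5 h6]] h7].
  by rewrite /Iinv /Common /upd /=.
apply: (t_seq (Q := fun s => Iinv m s /\ rv s 2 = 0 /\ rv s 3 = 0 /\ rv s 4 = 0)).
  apply: t_rassign => s [[[h0 [h1 [h2 [h3 h4]]]] [h5 h6]] [h7 h8]].
  by rewrite /Iinv /Common /upd /=.
apply: (t_seq (Q := Kinv 0)).
  apply: t_nassign => s [[[h0 [h1 [h2 [h3 h4]]]] [h5 h6]] [h7 [h8 h9]]].
  by rewrite /Kinv /upd /= /Cn /Fn !big_geq.
apply: t_seq; first exact: kloop_ok.
apply: t_rassign => s [h1 [h2 [h3 [h4 [h5 [h6 h7]]]]]].
by rewrite /upd /=.
Qed.

End ProgSpec.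

Section Prob.
Context (R : realType) (d : measure_display) (T : measurableType d) (P : probability T R).
Variables (I : finType) (A : I -> set T) (p : I -> R).
Hypotheses (mA : forall i, measurable (A i)) (hP : forall i, P (A i) = (p i)%:E)
  (hind : mutually_independent P A).

Definition Ev (S U : {set I}) :=
  [set w | (forall q, q \in S -> A q w) /\ (forall q, q \in U -> ~ A q w)].

Lemma Ev_meas S U : measurable (Ev S U).
Proof.
have -> : Ev S U = \bigcap_(q in [set q | q \in S]) A q `&`
                   \bigcap_(q in [set q | q \in U]) ~` A q.
  by apply/seteqP; split => w /= [h1 h2]; split => q qS; [apply: h1|apply: h2|apply: h1|apply: h2].
by apply: measurableI; apply: fin_bigcap_measurable; try exact: finite_finset;
  move=> q _; solve [exact: mA | exact: measurableC].
Qed.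

Lemma Ev_prob N : forall U S : {set I}, #|U| = N -> (forall q, q \in S -> q \notin U) ->
  P (Ev S U) = (\prod_(q in S) p q * \prod_(q in U) (1 - p q))%:E.
Proof.
elim: N => [|N IH] U S hU hSU.
  have U0 : U = finset.set0 by apply/eqP; rewrite -cards_eq0 hU.
  subst U; rewrite big_set0 mulr1.
  have -> : Ev S finset.set0 = [set w | forall q, q \in S -> A q w].
    by apply/seteqP; split => w /=; [case|split => // q; rewrite inE].
  rewrite hind -prodEFin; apply: eq_bigr => q _; exact: hP.
have /set0Pn [q qU] : U != finset.set0 by rewrite -cards_eq0 hU.
set U' := U :\ q.
have hU' : #|U'| = N by move: hU; rewrite (cardsD1 q U) qU add1n => -[].
have qS : q \notin S by apply/negP => /hSU; rewrite qU.
have qU' : q \notin U' by rewrite /U' in_setD1 eqxx.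
have hSU' : forall r, r \in S -> r \notin U'.
  by move=> r rS; rewrite /U' in_setD1 negb_and (hSU r rS) orbT.
have hSU'' : forall r, r \in q |: S -> r \notin U'.
  move=> r; rewrite in_setU1 => /orP[/eqP -> //|]; exact: hSU'.
have E1 : Ev S U = Ev S U' `\` A q.
  apply/seteqP; split => w /=.
    move=> [h1 h2]; split; last by apply: h2.
    by split=> // r; rewrite /U' in_setD1 => /andP[_]; apply: h2.
  move=> [[h1 h2] h3]; split => // r rU.
  have [->//|rq] := eqVneq r q.
  by apply: h2; rewrite /U' !inE rq.
have E2 : Ev (q |: S) U' = Ev S U' `&` A q.
  apply/seteqP; split => w /=.
    move=> [h1 h2]; split; last by apply: h1; rewrite !inE eqxx.
    by split=> // r rS; apply: h1; rewrite !inE rS orbT.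
  move=> [[h1 h2] h3]; split => // r; rewrite !inE => /orP[/eqP -> //|]; exact: h1.
have f1 := IH U' S hU' hSU'.
have f2 := IH U' (q |: S) hU' hSU''.
have lt1 : (P (Ev S U') < +oo)%E by rewrite f1 ltry.
have hD : P (Ev S U' `\` A q) = (P (Ev S U') - P (Ev S U' `&` A q))%E :=
  measureD (Ev_meas _ _) (mA q) lt1.
rewrite E1 hD -E2 f1 f2 -EFinB.
rewrite big_setU1 //= (bigD1 q qU) /=.
have -> : \prod_(i in U | i != q) (1 - p i) = \prod_(i in U') (1 - p i).
  by apply: eq_bigl => r; rewrite /U' !inE andbC.
congr (_%:E); ring.
Qed.

Lemma atom_eq (eps : I -> bool) :
  [set w | forall q, A q w <-> eps q] = Ev [set q | eps q] [set q | ~~ eps q].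
Proof.
  apply/seteqP; split => w /=.
    move=> h; split => q; rewrite inE.
      by move=> /h.
    by move=> /negP nq /h.
  move=> [h1 h2] q; split.
    move=> Aq; case E: (eps q) => //; exfalso; apply: (h2 q) Aq; by rewrite inE E.
  by move=> eq; apply: h1; rewrite inE.
Qed.

Lemma atom_meas (eps : I -> bool) : measurable [set w | forall q, A q w <-> eps q].
Proof. by rewrite atom_eq; exact: Ev_meas. Qed.

Lemma atom_prob (eps : I -> bool) :
  P [set w | forall q, A q w <-> eps q] = (\prod_q (if eps q then p q else 1 - p q))%:E.
Proof.
have -> : [set w | forall q, A q w <-> eps q] = Ev [set q | eps q] [set q | ~~ eps q].
  apply/seteqP; split => w /=.
    move=> h; split => q; rewrite inE.
      by move=> /h.
    by move=> /negP nq /h.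
  move=> [h1 h2] q; split.
    move=> Aq; case E: (eps q) => //; exfalso; apply: (h2 q) Aq; by rewrite inE E.
  by move=> eq; apply: h1; rewrite inE.
rewrite (Ev_prob (erefl _)); last by move=> q; rewrite !inE => ->.
congr (_%:E); rewrite [RHS](bigID eps) /=; congr (_ * _).
  by apply: eq_big => q; rewrite ?inE // => ->.
by apply: eq_big => q; rewrite ?inE // => /negbTE ->.
Qed.

End Prob.

Section Integ.
Context (R : realType) (d : measure_display) (T : measurableType d) (P : probability T R).
Variables (F : finType) (g : T -> F).
Hypothesis mg : forall y, measurable (g @^-1` [set y]).

Lemma integral_fin (h : F -> R) : (forall y, 0 <= h y) ->
  (\int[P]_w (h (g w))%:E)%E = (\sum_y h y * fine (P (g @^-1` [set y])))%:E.
Proof.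
move=> h0.
have fin y : P (g @^-1` [set y]) = (fine (P (g @^-1` [set y])))%:E.
  rewrite fineK // ge0_fin_numE //; apply: (le_lt_trans (probability_le1 _ _)) => //.
  exact: ltry.
transitivity (\int[P]_w (\sum_y (h y)%:E * (\1_(g @^-1` [set y]) w)%:E))%E.
  apply: eq_integral => w _.
  rewrite (bigD1 (g w)) //= indicE mem_set // mule1 big1 ?adde0 // => y ny.
  by rewrite indicE memNset ?mule0 //= => /esym/eqP; rewrite (negbTE ny).
rewrite ge0_integral_sum //; last 2 first.
- move=> y; apply: measurable_funeM; apply/measurable_realfun.measurable_EFinP.
  exact: measurable_realfun.measurable_indic.
- by move=> y w _; rewrite mule_ge0 // lee_fin.
rewrite -sumEFin; apply: eq_bigr => y _.
rewrite ge0_integralZl //; try (by rewrite lee_fin);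
  try (by apply/measurable_realfun.measurable_EFinP; exact: measurable_realfun.measurable_indic).
by rewrite integral_indic // setIT EFinM -fin.
Qed.

End Integ.

Section Comb.
Variable R : realFieldType.
Variables (n m : nat) (x : 'I_n -> bool) (a : 'I_m -> 'I_n -> R).

Definition linr (r : R) : {poly R} := r%:P + (1 - r) *: 'X.
Definition rr (i : 'I_m) : R := \prod_(j < n) (1 - (if x j then 1 else 0) * a i j).
Definition config := {ffun 'I_m -> {ffun 'I_n -> bool}}.
Definition wgt i j (b : bool) := if b then a i j else 1 - a i j.
Definition W i (row : {ffun 'I_n -> bool}) := \prod_j wgt i j (row j).
Definition cfgp (e : config) := \prod_i W i (e i).
Definition cov (row : {ffun 'I_n -> bool}) := [exists j, x j && row j].
Definition Yc (e : config) := #|[pred i | cov (e i)]|.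

Lemma row_sum1 i : \sum_(row : {ffun 'I_n -> bool}) W i row = 1.
Proof.
rewrite /W -(bigA_distr_bigA (fun j b => wgt i j b)) /=.
by apply: big1 => j _; rewrite big_bool /wgt /=; ring.
Qed.

Lemma prod_bool (I : finType) (b : I -> bool) : \prod_j ((b j)%:R : R) = ([forall j, b j])%:R.
Proof.
case: (boolP [forall j, b j]) => [/forallP h|/forallPn [j nj]].
  by apply: big1 => j _; rewrite h.
by rewrite (bigD1 j) //= (negbTE nj) mul0r.
Qed.

Lemma row_sum_ncov i : \sum_(row : {ffun 'I_n -> bool}) W i row * (~~ cov row)%:R = rr i.
Proof.
transitivity (\sum_(row : {ffun 'I_n -> bool}) \prod_j (wgt i j (row j) * (~~ (x j && row j))%:R)).
  apply: eq_bigr => row _; rewrite big_split /= prod_bool /cov negb_exists.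
  by [].
rewrite -(bigA_distr_bigA (fun j b => wgt i j b * (~~ (x j && b))%:R)) /rr.
apply: eq_bigr => j _; rewrite big_bool /wgt /=.
by case: (x j) => /=; ring.
Qed.

Lemma row_gen i : \sum_(row : {ffun 'I_n -> bool}) (W i row)%:P * (if cov row then 'X else 1)
  = linr (rr i).
Proof.
transitivity (\sum_(row : {ffun 'I_n -> bool}) ((W i row)%:P * 'X +
    (W i row * (~~ cov row)%:R)%:P * (1 - 'X))).
  apply: eq_bigr => row _; case: (cov row) => /=.
    by rewrite mulr0 polyC0 mul0r addr0.
  by rewrite mulr1; ring.
rewrite big_split /= -!big_distrl /= -!rmorph_sum /= row_sum1 row_sum_ncov.
rewrite /linr -mul_polyC polyCB; ring.
Qed.

Lemma gen : \sum_(e : config) cfgp e *: 'X^(Yc e) = \prod_i linr (rr i).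
Proof.
under [RHS]eq_bigr do rewrite -row_gen.
rewrite (bigA_distr_bigA (fun i row => (W i row)%:P * (if cov row then 'X else 1))) /=.
apply: eq_bigr => e _.
rewrite -mul_polyC /cfgp rmorph_prod /Yc -prodr_const [X in _ * X]big_mkcond /=.
by rewrite -big_split.
Qed.

Lemma coef_gen v : \sum_(e : config) cfgp e * (Yc e == v)%:R = (\prod_i linr (rr i))`_v.
Proof.
rewrite -gen coef_sum; apply: eq_bigr => e _; by rewrite coefZ coefXn eq_sym.
Qed.

Lemma sum_h (h : nat -> R) :
  \sum_(e : config) cfgp e * h (Yc e) = \sum_(v < m.+1) (\prod_i linr (rr i))`_v * h v.
Proof.
under [RHS]eq_bigr do rewrite -coef_gen big_distrl /=.
rewrite exchange_big /=; apply: eq_bigr => e _.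
have hY : (Yc e < m.+1)%N by rewrite ltnS /Yc -[X in (_ <= X)%N]card_ord max_card.
rewrite (bigD1 (Ordinal hY)) //= eqxx mulr1 big1 ?addr0 // => v nv.
have -> : (Yc e == v) = false.
  by apply/negbTE; apply: contra nv => /eqP E; apply/eqP/val_inj; rewrite /= E.
by rewrite mulr0 mul0r.
Qed.

Lemma sum_pi : \sum_(e : config) cfgp e = 1.
Proof.
rewrite /cfgp -(bigA_distr_bigA (fun i row => W i row)) /=.
by apply: big1 => i _; exact: row_sum1.
Qed.

End Comb.

Section Sup.
Variable R : realType.
Variables (n m : nat) (alpha : R) (A0 A1 : nat -> R).
Hypothesis ha : 0 < alpha <= 1.
Let q := qc n m A0 A1.
Hypothesis hsum : \sum_(v < m.+1) q v = 1.

Definition Fr (eta : R) := \sum_(v < m.+1) q v * Num.max (eta - v%:R) 0.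
Definition Gr (eta : R) := eta - alpha^-1 * Fr eta.
Let Fn' := Fn n m A0 A1.
Let Gn' := Gn n m alpha A0 A1.
Let bestf' := bestf n m alpha A0 A1.

Lemma Fr_nat k : (k <= m.+1)%N -> Fr k%:R = Fn' k.
Proof.
move=> km; rewrite /Fr /Fn' /Fn -(big_mkord xpredT (fun v => q v * Num.max (k%:R - v%:R) 0)).
rewrite (big_cat_nat (leq0n k) km) /= [X in _ + X]big1_seq ?addr0.
  apply: eq_big_nat => v /andP[_ vk].
  by rewrite max_l ?subr_ge0 ?ler_nat ?(ltnW vk) // natrB // ltnW.
move=> v /andP[_]; rewrite mem_index_iota => /andP[kv _].
by rewrite max_r ?mulr0 // subr_le0 ler_nat.
Qed.

Lemma Gr_nat k : (k <= m.+1)%N -> Gr k%:R = Gn' k.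
Proof. by move=> km; rewrite /Gr Fr_nat // /Gn' /Gn mulrC. Qed.

Lemma Gn0 : Gn' 0 = 0.
Proof. by rewrite /Gn' /Gn /Fn big_geq // mul0r subr0. Qed.

Lemma bestf_props N : (forall k, (k < N)%N -> Gn' k <= bestf' N) /\
  exists2 k0, (k0 <= N)%N & bestf' N = Gn' k0.
Proof.
elim: N => [|N [IH1 [k0 k0N IH2]]]; first by split=> //; exists 0%N => //; rewrite Gn0.
have mono : bestf' N <= bestf' N.+1.
  by rewrite /bestf' /=; case: ifP => // h.
split.
  move=> k; rewrite ltnS leq_eqVlt => /orP[/eqP ->|kN].
    rewrite /bestf' /=; case: ifP => // /negbT; rewrite -ltNge => /ltW.
    by [].
  exact: le_trans (IH1 _ kN) mono.
rewrite /bestf' /=; case: ifP => _; first by exists N.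
by exists k0 => //; apply: leqW.
Qed.

Lemma Gr_le0 eta : eta <= 0 -> Gr eta <= bestf' m.+1.
Proof.
move=> e0; have -> : Gr eta = eta.
  rewrite /Gr /Fr big1 ?mulr0 ?subr0 // => v _.
  by rewrite max_r ?mulr0 // subr_le0 (le_trans e0).
apply: (le_trans e0); rewrite -Gn0; apply: (proj1 (bestf_props _)); done.
Qed.

Lemma Gr_interp k eta : (k < m)%N -> k%:R <= eta <= k.+1%:R ->
  Gr eta <= bestf' m.+1.
Proof.
move=> km /andP[h1 h2].
have hk1 : (k.+1%:R : R) = k%:R + 1 by rewrite -natr1.
set l := k.+1%:R - eta.
have hterm v : Num.max (eta - v%:R) 0 =
   l * Num.max (k%:R - v%:R) 0 + (1 - l) * Num.max (k.+1%:R - v%:R) 0.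
  case: (leqP v k) => vk.
    have vk' : (v%:R : R) <= k%:R by rewrite ler_nat.
    have e1 : 0 <= eta - v%:R by lra.
    have e2 : 0 <= k%:R - v%:R :> R by lra.
    have e3 : 0 <= k.+1%:R - v%:R :> R by rewrite hk1; lra.
    by rewrite (max_l e1) (max_l e2) (max_l e3) /l hk1; ring.
  have vk' : (k.+1%:R : R) <= v%:R by rewrite ler_nat.
  have e1 : eta - v%:R <= 0 by lra.
  have e2 : k%:R - v%:R <= 0 :> R by rewrite hk1 in vk'; lra.
  have e3 : k.+1%:R - v%:R <= 0 :> R by lra.
  by rewrite (max_r e1) (max_r e2) (max_r e3); ring.
have hF : Fr eta = l * Fr k%:R + (1 - l) * Fr k.+1%:R.
  rewrite /Fr !mulr_sumr -big_split /=; apply: eq_bigr => v _.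
  by rewrite hterm; ring.
have hG : Gr eta = l * Gr k%:R + (1 - l) * Gr k.+1%:R.
  rewrite /Gr hF /l; ring.
have [B1 _] := bestf_props m.+1.
have g1 : Gr k%:R <= bestf' m.+1 by rewrite Gr_nat; [apply: B1; lia|lia].
have g2 : Gr k.+1%:R <= bestf' m.+1 by rewrite Gr_nat; [apply: B1; lia|lia].
have l0 : 0 <= l by rewrite /l subr_ge0.
have l1 : l <= 1 by rewrite /l hk1; lra.
rewrite hG; nra.
Qed.

Lemma Gr_big eta : m%:R <= eta -> Gr eta <= bestf' m.+1.
Proof.
move=> me.
have hF : Fr eta = Fr m%:R + (eta - m%:R).
  have -> : eta - m%:R = (\sum_(v < m.+1) q v) * (eta - m%:R) by rewrite hsum mul1r.
  rewrite /Fr mulr_suml -big_split /=; apply: eq_bigr => v _.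
  have vm : (v%:R : R) <= m%:R by rewrite ler_nat -ltnS.
  have e1 : 0 <= eta - v%:R by lra.
  have e2 : 0 <= m%:R - v%:R :> R by lra.
  by rewrite (max_l e1) (max_l e2); ring.
have ainv : 1 <= alpha^-1.
  move: ha => /andP[a0 a1]; rewrite -[1]invr1 lef_pV2 ?posrE //.
have [B1 _] := bestf_props m.+1.
have g1 : Gr m%:R <= bestf' m.+1 by rewrite Gr_nat; [apply: B1; lia|lia].
have -> : Gr eta = Gr m%:R + (eta - m%:R) * (1 - alpha^-1).
  by rewrite /Gr hF; ring.
have : (eta - m%:R) * (1 - alpha^-1) <= 0 by rewrite mulr_ge0_le0 // ?subr_ge0 ?subr_le0.
lra.
Qed.

Lemma Gr_le eta : Gr eta <= bestf' m.+1.
Proof.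
case: (leP eta m%:R) => [em|me]; last by apply: Gr_big; exact: ltW.
suff H : forall k, (k <= m)%N -> forall e, e <= k%:R -> Gr e <= bestf' m.+1.
  exact: (H m (leqnn m) eta em).
elim=> [_ e|k IH km e ek]; first exact: Gr_le0.
case: (leP e k%:R) => [ek'|ke]; first by apply: IH => //; apply: ltnW.
by apply: (Gr_interp (k := k)) => //; rewrite (ltW ke).
Qed.

Lemma sup_eq : ereal_sup [set (Gr eta)%:E | eta in [set: R]] = (bestf' m.+1)%:E.
Proof.
apply/eqP; rewrite eq_le; apply/andP; split.
  by apply: ge_ereal_sup => y [eta _ <-]; rewrite lee_fin; exact: Gr_le.
have [_ [k0 k0m ->]] := bestf_props m.+1.
rewrite -Gr_nat //; apply: ereal_sup_ubound; by exists k0%:R.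
Qed.

End Sup.

Theorem proposition4 :
  exists (prog : cmd) (c e : nat),
  forall (R : realType) (d : measure_display) (T : measurableType d)
    (P : probability T R) (n m k : nat) (alpha : R)
    (E : 'I_m -> 'I_n -> bool) (a : 'I_m -> 'I_n -> R)
    (t : 'I_m -> 'I_n -> T -> bool) (x : 'I_n -> bool),
    (0 < k)%N ->
    0 < alpha <= 1 ->
    (forall i j, 0 <= a i j <= 1) ->
    (forall i j, measurable [set w : T | t i j w]) ->
    (forall i j, E i j -> P [set w : T | t i j w] = (a i j)%:E) ->
    (forall i j, ~~ E i j -> (forall w, t i j w = false) /\ a i j = 0) ->
    mutually_independent P (fun p : 'I_m * 'I_n => [set w : T | t p.1 p.2 w]) ->
    (\sum_(j < n) (x j : nat) <= k)%N ->
    exists (s' : state R) (cost : nat),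
      exec prog (init_state k alpha x a) cost s' /\
      (cost <= c * (n + m + 1) ^ e)%N /\
      ((rv s' 0%N)%:E = CVaR P alpha (sigma R t x)).
Proof.
exists prog, 40%N, 2%N.
move=> R d T P n m k alpha E a t x k0 ha ha01 mt hPE hnE hind hx.
set s0 := init_state k alpha x a.
set A0 := ar s0 0. set A1 := ar s0 1.
have hA0 : forall j : 'I_n, A0 j = if x j then 1 else 0.
  by move=> j; rewrite /A0 /s0 /init_state /= valK.
have hA1 : forall (i : 'I_m) (j : 'I_n), A1 (i * n + j)%N = a i j.
  move=> i j; have n0 : (0 < n)%N by apply: leq_ltn_trans (ltn_ord j).
  rewrite /A1 /s0 /init_state /= divnMDl // divn_small // addn0 modnMDl modn_small //.
  by rewrite !valK.
have hpre : Common n m alpha A0 A1 s0 /\ forall idx, ar s0 2 idx = 0 by [].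
have [s' [cost [ex [hc hout]]]] := prog_ok hpre.
exists s', cost; split => //; split; first by rewrite expnS expn1.
rewrite hout.
have hrn : forall i : 'I_m, rn n A0 A1 i = rr x a i.
  move=> i; rewrite /rn /rr big_mkord; apply: eq_bigr => j _; by rewrite hA0 hA1.
have hQ : Qn n A0 A1 m = \prod_(i < m) linr (rr x a i).
  rewrite /Qn big_mkord; apply: eq_bigr => i _; by rewrite hrn.
have hq : forall v, qc n m A0 A1 v = (\prod_(i < m) linr (rr x a i))`_v.
  by move=> v; rewrite /qc hQ.
have hsum : \sum_(v < m.+1) qc n m A0 A1 v = 1.
  transitivity (\sum_(e : config n m) cfgp a e * 1).
    rewrite (sum_h x a (fun _ => 1)); apply: eq_bigr => v _; by rewrite hq mulr1.
  under eq_bigr do rewrite mulr1; exact: sum_pi.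
have hint : forall eta, (\int[P]_w (Num.max (eta - sigma R t x w) 0)%:E)%E
    = (Fr n m A0 A1 eta)%:E.
  move=> eta.
  pose X := fun w => [ffun i => [ffun j => t i j w]] : config n m.
  pose h := fun e : config n m => Num.max (eta - (Yc x e)%:R) 0.
  have hsig : forall w, sigma R t x w = (Yc x (X w))%:R.
    move=> w; rewrite /sigma /covered /Yc; congr (_%:R); apply: eq_card => i.
    by rewrite !inE /cov; apply: eq_existsb => j; rewrite !ffunE.
  transitivity (\int[P]_w (h (X w))%:E)%E.
    by apply: eq_integral => w _; rewrite hsig.
  set Aset := fun p : 'I_m * 'I_n => [set w : T | t p.1 p.2 w].
  have mA : forall q, measurable (Aset q) by move=> q; exact: mt.
  have hPA : forall q, P (Aset q) = (a q.1 q.2)%:E.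
    move=> [i j] /=; case: (boolP (E i j)) => [/hPE //|/hnE [h0 ->]].
    have -> : Aset (i, j) = set0 by apply/seteqP; split => w; rewrite /Aset /= ?h0.
    by rewrite measure0.
  have fib : forall e, X @^-1` [set e] = [set w | forall q, Aset q w <-> e q.1 q.2].
    move=> e; apply/seteqP; split => w /=.
      by move=> <- [i j]; rewrite /Aset /= !ffunE.
    move=> hw; apply/ffunP => i; apply/ffunP => j; rewrite !ffunE.
    have := hw (i, j); rewrite /Aset /=.
    by case: (t i j w); case: (e i j) => // -[H1 H2]; [have := H1 isT | have := H2 isT].
  rewrite (@integral_fin _ _ _ P _ X); last 2 first.
  - by move=> e; rewrite fib; apply: atom_meas.
  - by move=> e; rewrite /h le_max lexx orbT.
  congr (_%:E).
  transitivity (\sum_(e : config n m) cfgp a e * (fun v : nat => Num.max (eta - v%:R) 0) (Yc x e)).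
    apply: eq_bigr => e _; rewrite mulrC; congr (_ * _).
    rewrite fib (atom_prob mA hPA hind) /=.
    by rewrite /cfgp /W /wgt pair_big /=.
  rewrite (sum_h x a (fun v : nat => Num.max (eta - v%:R) 0)) /Fr; apply: eq_bigr => v _; by rewrite hq.
rewrite /CVaR.
have -> : [set (eta%:E - (alpha^-1)%:E * \int[P]_w (Num.max (eta - sigma R t x w) 0)%:E)%E
    | eta in [set: R]] = [set (Gr n m alpha A0 A1 eta)%:E | eta in [set: R]].
  by apply: eq_imagel => eta _; rewrite hint /Gr -EFinM -EFinB.
by rewrite (sup_eq ha hsum).
Qed.
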